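(* Let $\mathbf{X},\mathbf{Y},\mathbf{T}_1,\mathbf{T}_2$ be random variables on finite alphabets, with the joint law $p(\mathbf{X},\mathbf{Y})$ fixed and with the Markov structure described in the context. Fix Lagrange multipliers $\beta,\lambda,\gamma$ with $\beta>0$, $\lambda>0$, $\gamma\ge 0$. Consider the functional $$\mathcal{F}[p(\mathbf{T}_1|\mathbf{X}),p(\mathbf{T}_2|\mathbf{X})] = -I(\mathbf{Y};\mathbf{T}_1,\mathbf{T}_2)+\beta I(\mathbf{T}_1;\mathbf{X})+\lambda I(\mathbf{T}_2;\mathbf{X})+\gamma I(\mathbf{T}_1;\mathbf{T}_2),$$ to be minimized over the two conditional distributions $p(\mathbf{T}_1|\mathbf{X})$ and $p(\mathbf{T}_2|\mathbf{X})$, each ranging over conditional probability distributions. Then an optimal (minimizing) pair of conditional distributions, assumed to have all the probabilities below strictly positive, satisfies the following self-consistent equations for all $x,t_1,t_2$: $$p(t_1|x)=\frac{p(t_1)}{Z_1(x)}\exp\Big\{\frac{\gamma}{\beta}D_{KL}\big[p(\mathbf{T}_2|x)\,\|\,p(\mathbf{T}_2|t_1)\big]-\frac{1}{\beta}\sum_{t_2}p(t_2|x)\,D_{KL}\big[p(\mathbf{Y}|x)\,\|\,p(\mathbf{Y}|t_1,t_2)\big]\Big\},$$ $$p(t_2|x)=\frac{p(t_2)}{Z_2(x)}\exp\Big\{\frac{\gamma}{\lambda}D_{KL}\big[p(\mathbf{T}_1|x)\,\|\,p(\mathbf{T}_1|t_2)\big]-\frac{1}{\lambda}\sum_{t_1}p(t_1|x)\,D_{KL}\big[p(\mathbf{Y}|x)\,\|\,p(\mathbf{Y}|t_1,t_2)\big]\Big\},$$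 where $Z_1(x),Z_2(x)$ are normalizing constants making the right-hand sides probability distributions in $t_1$ (resp. $t_2$).
   Context: Standing assumptions: $\mathbf{T}_1$ and $\mathbf{T}_2$ are stochastic mappings of $\mathbf{X}$, given by conditional distributions $p(\mathbf{T}_1|\mathbf{X})$, $p(\mathbf{T}_2|\mathbf{X})$; the joint law factorizes as $p(x,y,t_1,t_2)=p(x)\,p(y|x)\,p(t_1|x)\,p(t_2|x)$ (so each of $\mathbf{T}_1$, $\mathbf{T}_2$, $\mathbf{Y}$ is conditionally independent of all the other variables given $\mathbf{X}$). All marginals and conditionals ($p(t_1)$, $p(t_2)$, $p(t_2|t_1)$, $p(t_1|t_2)$, $p(y|t_1,t_2)$) are those induced by this joint law. $D_{KL}$ denotes Kullback–Leibler divergence and $I(\cdot;\cdot)$ mutual information. The functional arises as the Lagrangian of the problem: maximize $I(\mathbf{Y};\mathbf{T}_1,\mathbf{T}_2)$ subject to $I(\mathbf{X};\mathbf{T}_1)\le r_1$, $I(\mathbf{X};\mathbf{T}_2)\le r_2$, $I(\mathbf{T}_1;\mathbf{T}_2)\le\epsilon$. *)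

(* Defs.v *)
From HB Require Import structures.
From mathcomp Require Import all_boot all_order all_algebra.
From mathcomp Require Import reals sequences exp.
Set Implicit Arguments. Unset Strict Implicit. Unset Printing Implicit Defensive.
Import Order.TTheory GRing.Theory Num.Theory.
Local Open Scope ring_scope.

Section IB.
Variable R : realType.

Definition plogq (a b : R) : R := if a == 0 then 0 else a * ln (a / b).

Definition KL (A : finType) (P Q : A -> R) : R := \sum_(a : A) plogq (P a) (Q a).

Definition MI (A B : finType) (pab : A -> B -> R) (pa : A -> R) (pb : B -> R) : R :=
  \sum_(a : A) \sum_(b : B) plogq (pab a b) (pa a * pb b).

Definition cond_dist (A B : finType) (q : A -> B -> R) : Prop :=
  (forall a b, 0 <= q a b) /\ (forall a, \sum_(b : B) q a b = 1).

Definition joint_dist (A B : finType) (p : A -> B -> R) : Prop :=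
  (forall a b, 0 <= p a b) /\ \sum_(a : A) \sum_(b : B) p a b = 1.

Variables (X Y T1 T2 : finType).
(* pXY : the fixed law p(x,y); q1 = p(t1|x); q2 = p(t2|x).
   Joint law p(x,y,t1,t2) = p(x,y) q1(x,t1) q2(x,t2). *)
Variable pXY : X -> Y -> R.

Definition pX (x : X) : R := \sum_(y : Y) pXY x y.
Definition pY (y : Y) : R := \sum_(x : X) pXY x y.
Definition pYgX (x : X) (y : Y) : R := pXY x y / pX x.

Section Kernels.
Variables (q1 : X -> T1 -> R) (q2 : X -> T2 -> R).

Definition pT1 (t1 : T1) : R := \sum_(x : X) pX x * q1 x t1.
Definition pT2 (t2 : T2) : R := \sum_(x : X) pX x * q2 x t2.
Definition pXT1 (x : X) (t1 : T1) : R := pX x * q1 x t1.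
Definition pXT2 (x : X) (t2 : T2) : R := pX x * q2 x t2.
Definition pT1T2 (t1 : T1) (t2 : T2) : R := \sum_(x : X) pX x * q1 x t1 * q2 x t2.
Definition pT12Y (t : T1 * T2) (y : Y) : R :=
  \sum_(x : X) pXY x y * q1 x t.1 * q2 x t.2.
Definition pT12 (t : T1 * T2) : R := pT1T2 t.1 t.2.

Definition pT2gT1 (t1 : T1) (t2 : T2) : R := pT1T2 t1 t2 / pT1 t1.
Definition pT1gT2 (t2 : T2) (t1 : T1) : R := pT1T2 t1 t2 / pT2 t2.
Definition pYgT12 (t1 : T1) (t2 : T2) (y : Y) : R := pT12Y (t1, t2) y / pT1T2 t1 t2.

Definition I_Y_T12 : R := MI pT12Y pT12 pY.
Definition I_T1_X : R := MI pXT1 pX pT1.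
Definition I_T2_X : R := MI pXT2 pX pT2.
Definition I_T1_T2 : R := MI pT1T2 pT1 pT2.

End Kernels.

Definition IB_functional (beta lambda gamma : R)
  (q1 : X -> T1 -> R) (q2 : X -> T2 -> R) : R :=
  - I_Y_T12 q1 q2 + beta * I_T1_X q1 + lambda * I_T2_X q2
  + gamma * I_T1_T2 q1 q2.

Definition expo1 (beta gamma : R) (q1 : X -> T1 -> R) (q2 : X -> T2 -> R)
  (x : X) (t1 : T1) : R :=
  gamma / beta * KL (q2 x) (pT2gT1 q1 q2 t1)
  - beta^-1 * \sum_(t2 : T2) q2 x t2 * KL (pYgX x) (pYgT12 q1 q2 t1 t2).

Definition expo2 (lambda gamma : R) (q1 : X -> T1 -> R) (q2 : X -> T2 -> R)
  (x : X) (t2 : T2) : R :=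
  gamma / lambda * KL (q1 x) (pT1gT2 q1 q2 t2)
  - lambda^-1 * \sum_(t1 : T1) q1 x t1 * KL (pYgX x) (pYgT12 q1 q2 t1 t2).

Definition Z1 beta gamma q1 q2 (x : X) : R :=
  \sum_(t1 : T1) pT1 q1 t1 * expR (expo1 beta gamma q1 q2 x t1).
Definition Z2 lambda gamma q1 q2 (x : X) : R :=
  \sum_(t2 : T2) pT2 q2 t2 * expR (expo2 lambda gamma q1 q2 x t2).

End IB.

(* Main.v *)
Require Import Defs.
From HB Require Import structures.
From mathcomp Require Import all_boot all_order all_algebra.
From mathcomp Require Import all_classical reals topology normedtype sequences derive realfun exp.
From mathcomp Require Import lra ring.
Import Order.TTheory GRing.Theory Num.Theory.
Import numFieldNormedType.Exports.
Local Open Scope ring_scope.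
Set Implicit Arguments. Unset Strict Implicit. Unset Printing Implicit Defensive.

Section H.
Variable R : realType.

Lemma is_derive_comp1 (f g : R -> R) (t df dg : R) : is_derive t 1 f df ->
  is_derive (f t) 1 g dg -> is_derive t 1 (g \o f) (dg * df).
Proof.
move=> [fd <-] [gd <-]; apply: DeriveDef.
  apply/derivable1_diffP; apply: differentiable_comp; exact/derivable1_diffP.
by rewrite -derive1E derive1_comp // !derive1E.
Qed.

Lemma is_derive_bigsum (A : finType) (h : A -> R -> R) (t : R) (dh : A -> R) :
  (forall a, is_derive t 1 (h a) (dh a)) ->
  is_derive t 1 (fun z => \sum_(a : A) h a z) (\sum_(a : A) dh a).
Proof.
move=> H; rewrite /= unlock /=; elim: (index_enum A) => [|a s IH] /=.
  exact: is_derive_cst.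
exact: (is_deriveD (H a) IH).
Qed.

Lemma is_derive_mulr (f : R -> R) (k t df : R) : is_derive t 1 f df ->
  is_derive t 1 (fun z => f z * k) (df * k).
Proof.
move=> H; have := is_deriveM H (is_derive_cst k t 1).
rewrite /= scaler0 add0r => H'; rewrite mulrC; exact: H'.
Qed.

Lemma is_derive_affine (a0 a1 t : R) : is_derive t 1 (fun z => a0 + z * a1) a1.
Proof.
have := is_deriveD (is_derive_cst a0 t 1) (@is_derive_mulr id a1 t 1 (is_derive_id t (1:R))).
rewrite add0r mul1r; exact.
Qed.

Lemma plogqE (a b : R) : plogq a b = a * ln (a / b).
Proof. by rewrite /plogq; case: eqP => [->|//]; rewrite mul0r. Qed.

Definition dpl (a a1 b b1 : R) := a1 * ln (a / b) + a1 - a * b1 / b.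

Lemma is_derive_plogq (A B : R -> R) (a1 b1 t : R) :
  is_derive t 1 A a1 -> is_derive t 1 B b1 -> 0 < A t -> 0 < B t ->
  is_derive t 1 (fun z => plogq (A z) (B z)) (dpl (A t) a1 (B t) b1).
Proof.
move=> hA hB Ap Bp.
have Bn0 : B t != 0 by rewrite gt_eqF.
have An0 : A t != 0 by rewrite gt_eqF.
have hQ := is_deriveM hA (is_deriveV (f := B) Bn0 hB).
have Qp : 0 < A t / B t by rewrite divr_gt0.
have hL := @is_derive_comp1 _ (@ln R) _ _ _ hQ (is_derive1_ln Qp).
have hT := is_deriveM hA hL.
have -> : (fun z => plogq (A z) (B z)) = (A * (@ln R \o (A * (fun y => (B y)^-1)))).
  by apply/funext => z; rewrite plogqE.
apply: (is_derive_eq hT).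
rewrite /dpl /= /GRing.scale /=. field. by rewrite Bn0 An0.
Qed.

Lemma is_derive_MI (A B : finType) (pab : R -> A -> B -> R) (pa : R -> A -> R)
  (pb : R -> B -> R) dab da db (t : R) :
  (forall a, is_derive t 1 (fun z => pa z a) (da a)) ->
  (forall b, is_derive t 1 (fun z => pb z b) (db b)) ->
  (forall a b, is_derive t 1 (fun z => pab z a b) (dab a b)) ->
  (forall a b, (0 < pab t a b /\ 0 < pa t a * pb t b) \/
               ((forall z, pab z a b = 0) /\ dab a b = 0)) ->
  is_derive t 1 (fun z => MI (pab z) (pa z) (pb z))
    (\sum_a \sum_b dpl (pab t a b) (dab a b) (pa t a * pb t b)
                        (pa t a * db b + pb t b * da a)).
Proof.
move=> ha hb hab H; rewrite /MI; apply: is_derive_bigsum => a.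
apply: is_derive_bigsum => b.
case: (H a b) => [[p1 p2]|[z1 z2]].
  have K := @is_derive_plogq _ _ _ _ _ (hab a b) (is_deriveM (ha a) (hb b)) p1 p2.
  exact K.
have -> : (fun z => plogq (pab z a b) (pa z a * pb z b)) = cst 0.
  by apply/funext => z; rewrite z1 plogqE mul0r.
rewrite z1 z2 /dpl mul0r add0r !mul0r subr0; exact: is_derive_cst.
Qed.

Lemma sum_gt0 (A : finType) (f : A -> R) (a : A) :
  (forall b, 0 <= f b) -> 0 < f a -> 0 < \sum_b f b.
Proof.
move=> H Ha; rewrite (bigD1 a) //=; apply: (lt_le_trans Ha).
by rewrite lerDl; apply: sumr_ge0 => b _.
Qed.

Lemma is_derive_comb (f g h : R -> R) (c b l gm df dg dh t : R) :
  is_derive t 1 f df -> is_derive t 1 g dg -> is_derive t 1 h dh ->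
  is_derive t 1 (fun z => - f z + b * g z + l * c + gm * h z)
    (- df + b * dg + gm * dh).
Proof.
move=> hf hg hh.
have := is_deriveD (is_deriveD (is_deriveD (is_deriveN hf)
   (is_deriveM (is_derive_cst b t 1) hg)) (is_derive_cst (l * c) t 1))
   (is_deriveM (is_derive_cst gm t 1) hh).
rewrite /= /GRing.scale /= !mulr0 !addr0 => K; exact: K.
Qed.
End H.

Section Pert.
Variables (R : realType) (X Y T1 T2 : finType) (pXY : X -> Y -> R).
Variables (q1 v : X -> T1 -> R) (q2 : X -> T2 -> R).

Definition q1e (z : R) := fun x s => q1 x s + z * v x s.

Lemma pT1_lin z s : pT1 pXY (q1e z) s = pT1 pXY q1 s + z * pT1 pXY v s.
Proof.
rewrite /pT1 mulr_sumr -big_split; apply: eq_bigr => x _ /=; rewrite /q1e; ring.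
Qed.
Lemma pXT1_lin z x s : pXT1 pXY (q1e z) x s = pXT1 pXY q1 x s + z * pXT1 pXY v x s.
Proof. rewrite /pXT1 /q1e; ring. Qed.
Lemma pT1T2_lin z s u : pT1T2 pXY (q1e z) q2 s u = pT1T2 pXY q1 q2 s u + z * pT1T2 pXY v q2 s u.
Proof.
rewrite /pT1T2 mulr_sumr -big_split; apply: eq_bigr => x _ /=; rewrite /q1e; ring.
Qed.
Lemma pT12Y_lin z t y : pT12Y pXY (q1e z) q2 t y = pT12Y pXY q1 q2 t y + z * pT12Y pXY v q2 t y.
Proof.
rewrite /pT12Y mulr_sumr -big_split; apply: eq_bigr => x _ /=; rewrite /q1e; ring.
Qed.

Lemma d_pT1 (t : R) s : is_derive t 1 (fun z => pT1 pXY (q1e z) s) (pT1 pXY v s).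
Proof.
have -> : (fun z => pT1 pXY (q1e z) s) = (fun z => pT1 pXY q1 s + z * pT1 pXY v s).
  by apply/funext => z; rewrite pT1_lin.
exact: is_derive_affine.
Qed.
Lemma d_pXT1 (t : R) x s : is_derive t 1 (fun z => pXT1 pXY (q1e z) x s) (pXT1 pXY v x s).
Proof.
have -> : (fun z => pXT1 pXY (q1e z) x s) = (fun z => pXT1 pXY q1 x s + z * pXT1 pXY v x s).
  by apply/funext => z; rewrite pXT1_lin.
exact: is_derive_affine.
Qed.
Lemma d_pT1T2 (t : R) s u : is_derive t 1 (fun z => pT1T2 pXY (q1e z) q2 s u) (pT1T2 pXY v q2 s u).
Proof.
have -> : (fun z => pT1T2 pXY (q1e z) q2 s u) = (fun z => pT1T2 pXY q1 q2 s u + z * pT1T2 pXY v q2 s u).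
  by apply/funext => z; rewrite pT1T2_lin.
exact: is_derive_affine.
Qed.
Lemma d_pT12Y (t : R) w y : is_derive t 1 (fun z => pT12Y pXY (q1e z) q2 w y) (pT12Y pXY v q2 w y).
Proof.
have -> : (fun z => pT12Y pXY (q1e z) q2 w y) = (fun z => pT12Y pXY q1 q2 w y + z * pT12Y pXY v q2 w y).
  by apply/funext => z; rewrite pT12Y_lin.
exact: is_derive_affine.
Qed.

Definition Dval (beta gamma t : R) : R :=
  - (\sum_w \sum_y dpl (pT12Y pXY (q1e t) q2 w y) (pT12Y pXY v q2 w y)
        (pT12 pXY (q1e t) q2 w * pY pXY y)
        (pT12 pXY (q1e t) q2 w * 0 + pY pXY y * pT12 pXY v q2 w))
  + beta * (\sum_x \sum_s dpl (pXT1 pXY (q1e t) x s) (pXT1 pXY v x s)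
        (pX pXY x * pT1 pXY (q1e t) s)
        (pX pXY x * pT1 pXY v s + pT1 pXY (q1e t) s * 0))
  + gamma * (\sum_s \sum_u dpl (pT1T2 pXY (q1e t) q2 s u) (pT1T2 pXY v q2 s u)
        (pT1 pXY (q1e t) s * pT2 pXY q2 u)
        (pT1 pXY (q1e t) s * 0 + pT2 pXY q2 u * pT1 pXY v s)).

Hypothesis pXY_ge0 : forall x y, 0 <= pXY x y.
Hypothesis pX_gt0 : forall x, 0 < pX pXY x.
Hypothesis q2_gt0 : forall x u, 0 < q2 x u.

Lemma d_F (beta lambda gamma t : R) (x1 : X) :
  (forall x s, 0 < q1e t x s) ->
  is_derive t 1 (fun z => IB_functional pXY beta lambda gamma (q1e z) q2)
    (Dval beta gamma t).
Proof.
move=> hpos.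
have pT1p s : 0 < pT1 pXY (q1e t) s.
  apply: (@sum_gt0 _ _ _ x1) => [x|]; first by apply: mulr_ge0; apply: ltW.
  exact: mulr_gt0.
have pT2p u : 0 < pT2 pXY q2 u.
  apply: (@sum_gt0 _ _ _ x1) => [x|]; first by apply: mulr_ge0; apply: ltW.
  exact: mulr_gt0.
have pT1T2p s u : 0 < pT1T2 pXY (q1e t) q2 s u.
  apply: (@sum_gt0 _ _ _ x1) => [x|]; first by apply: mulr_ge0; [apply: mulr_ge0|]; apply: ltW.
  by apply: mulr_gt0; [apply: mulr_gt0|].
apply: is_derive_comb.
- apply: is_derive_MI.
  + move=> w; exact: d_pT1T2.
  + move=> y; exact: is_derive_cst.
  + move=> w y; exact: d_pT12Y.
  + move=> w y; case: (pickP (fun x => 0 < pXY x y)) => [x Hx|H0].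
      left; split.
        apply: (@sum_gt0 _ _ _ x) => [x'|].
          by rewrite mulr_ge0 ?mulr_ge0 ?pXY_ge0 // ltW.
        by rewrite mulr_gt0 ?mulr_gt0.
      apply: mulr_gt0; first exact: pT1T2p.
      apply: (@sum_gt0 _ _ _ x) => //.
    have z0 x : pXY x y = 0.
      by apply/eqP; rewrite eq_le pXY_ge0 andbT leNgt H0.
    right; split.
      by move=> z; rewrite /pT12Y big1 // => x _; rewrite z0 !mul0r.
    by rewrite /pT12Y big1 // => x _; rewrite z0 !mul0r.
- apply: is_derive_MI.
  + move=> x; exact: is_derive_cst.
  + move=> s; exact: d_pT1.
  + move=> x s; exact: d_pXT1.
  + move=> x s; left; split; first exact: mulr_gt0.
    exact: mulr_gt0.
- apply: is_derive_MI.
  + move=> s; exact: d_pT1.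
  + move=> u; exact: is_derive_cst.
  + move=> s u; exact: d_pT1T2.
  + move=> s u; left; split => //; exact: mulr_gt0.
Qed.
End Pert.


Section Marg.
Variables (R : realType) (X Y T1 T2 : finType) (pXY : X -> Y -> R).
Variables (q2 : X -> T2 -> R).
Hypothesis q2sum : forall x, \sum_u q2 x u = 1.

Lemma M1 (r : X -> T1 -> R) s : \sum_u pT1T2 pXY r q2 s u = pT1 pXY r s.
Proof.
rewrite /pT1T2 exchange_big; apply: eq_bigr => x _.
by rewrite -mulr_sumr q2sum mulr1.
Qed.

Lemma M2 (r : X -> T1 -> R) w : \sum_y pT12Y pXY r q2 w y = pT12 pXY r q2 w.
Proof.
rewrite /pT12Y /pT12 /pT1T2 exchange_big; apply: eq_bigr => x _.
by rewrite -!mulr_suml.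
Qed.

Lemma M3 (r : X -> T1 -> R) : \sum_w pT12 pXY r q2 w = \sum_s pT1 pXY r s.
Proof.
rewrite -(pair_big xpredT xpredT (fun s u => pT12 pXY r q2 (s, u))) /=.
by apply: eq_bigr => s _; rewrite -M1.
Qed.

Lemma M4 (r : X -> T1 -> R) : \sum_x \sum_s pXT1 pXY r x s = \sum_s pT1 pXY r s.
Proof. by rewrite exchange_big. Qed.
End Marg.


Lemma dpl_split (R : realType) (A B : finType) (f g h k : A -> B -> R) :
  \sum_a \sum_b dpl (f a b) (g a b) (h a b) (k a b) =
  \sum_a \sum_b g a b * ln (f a b / h a b) + \sum_a \sum_b (g a b - f a b * k a b / h a b).
Proof.
rewrite -big_split; apply: eq_bigr => a _; rewrite -big_split; apply: eq_bigr => b _.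
by rewrite /dpl /= addrA.
Qed.

Section Canc.
Variables (R : realType) (X Y T1 T2 : finType) (pXY : X -> Y -> R).
Variables (q1 v : X -> T1 -> R) (q2 : X -> T2 -> R).
Hypothesis q2sum : forall x, \sum_u q2 x u = 1.
Hypothesis pXY_ge0 : forall x y, 0 <= pXY x y.
Hypothesis pX_gt0 : forall x, 0 < pX pXY x.
Hypothesis pT1p : forall s, 0 < pT1 pXY q1 s.
Hypothesis pT2p : forall u, 0 < pT2 pXY q2 u.
Hypothesis pT1T2p : forall s u, 0 < pT1T2 pXY q1 q2 s u.

Lemma C1 : \sum_x \sum_s (pXT1 pXY v x s - pXT1 pXY q1 x s *
     (pX pXY x * pT1 pXY v s + pT1 pXY q1 s * 0) / (pX pXY x * pT1 pXY q1 s)) = 0.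
Proof.
have E x s : pXT1 pXY q1 x s * (pX pXY x * pT1 pXY v s + pT1 pXY q1 s * 0) /
   (pX pXY x * pT1 pXY q1 s) = pX pXY x * q1 x s * (pT1 pXY v s / pT1 pXY q1 s).
  rewrite /pXT1; field; rewrite !gt_eqF //.
under eq_bigr do under eq_bigr do rewrite E.
under eq_bigr do rewrite sumrB.
rewrite sumrB M4 [X in _ - X]exchange_big /=; apply/eqP; rewrite subr_eq0; apply/eqP.
apply: eq_bigr => s _; rewrite -mulr_suml -/(pT1 pXY q1 s).
field; rewrite gt_eqF //.
Qed.

Lemma C2 : \sum_s \sum_u (pT1T2 pXY v q2 s u - pT1T2 pXY q1 q2 s u *
     (pT1 pXY q1 s * 0 + pT2 pXY q2 u * pT1 pXY v s) / (pT1 pXY q1 s * pT2 pXY q2 u)) = 0.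
Proof.
apply: big1 => s _.
have E u : pT1T2 pXY q1 q2 s u *
     (pT1 pXY q1 s * 0 + pT2 pXY q2 u * pT1 pXY v s) / (pT1 pXY q1 s * pT2 pXY q2 u)
   = pT1T2 pXY q1 q2 s u * (pT1 pXY v s / pT1 pXY q1 s).
  field; rewrite !gt_eqF //.
under eq_bigr do rewrite E.
rewrite sumrB -mulr_suml !M1 //; field; rewrite gt_eqF //.
Qed.

Lemma pY0 y (r : X -> T1 -> R) w : pY pXY y = 0 -> pT12Y pXY r q2 w y = 0.
Proof.
move=> /eqP; rewrite /pY psumr_eq0 => [/allP H|x _]; last exact: pXY_ge0.
apply: big1 => x _; have /eqP -> := H x (mem_index_enum x); by rewrite !mul0r.
Qed.

Lemma C3 : \sum_w \sum_y (pT12Y pXY v q2 w y - pT12Y pXY q1 q2 w y *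
     (pT12 pXY q1 q2 w * 0 + pY pXY y * pT12 pXY v q2 w) / (pT12 pXY q1 q2 w * pY pXY y)) = 0.
Proof.
apply: big1 => w _.
have P12 : 0 < pT12 pXY q1 q2 w by case: w => s u; exact: pT1T2p.
have E y : pT12Y pXY q1 q2 w y *
     (pT12 pXY q1 q2 w * 0 + pY pXY y * pT12 pXY v q2 w) / (pT12 pXY q1 q2 w * pY pXY y)
   = pT12Y pXY q1 q2 w y * (pT12 pXY v q2 w / pT12 pXY q1 q2 w).
  have [Y0|Yn0] := eqVneq (pY pXY y) 0.
    by rewrite Y0 (@pY0 y q1 w Y0) !mul0r.
  field; rewrite Yn0 gt_eqF //.
under eq_bigr do rewrite E.
rewrite sumrB -mulr_suml !M2 //; field; rewrite gt_eqF //.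
Qed.
End Canc.


Section Rearr.
Variables (R : realType) (X Y T1 T2 : finType) (pXY : X -> Y -> R).
Variables (v : X -> T1 -> R) (q2 : X -> T2 -> R).

Lemma R1 (l : X -> T1 -> R) : \sum_x \sum_s pXT1 pXY v x s * l x s =
  \sum_x \sum_s v x s * (pX pXY x * l x s).
Proof. by apply: eq_bigr => x _; apply: eq_bigr => s _; rewrite /pXT1; ring. Qed.

Lemma R2 (l : T1 -> T2 -> R) : \sum_s \sum_u pT1T2 pXY v q2 s u * l s u =
  \sum_x \sum_s v x s * (pX pXY x * \sum_u q2 x u * l s u).
Proof.
rewrite /pT1T2; move: (pX pXY) => P.
under eq_bigr do under eq_bigr do rewrite mulr_suml.
under eq_bigr do rewrite exchange_big.
rewrite exchange_big; apply: eq_bigr => x _; apply: eq_bigr => s _.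
rewrite !mulr_sumr; apply: eq_bigr => u _; ring.
Qed.

Lemma R3 (l : T1 * T2 -> Y -> R) : \sum_w \sum_y pT12Y pXY v q2 w y * l w y =
  \sum_x \sum_s v x s * \sum_u \sum_y pXY x y * q2 x u * l (s, u) y.
Proof.
have -> : \sum_w \sum_y pT12Y pXY v q2 w y * l w y =
   \sum_s \sum_u \sum_y pT12Y pXY v q2 (s, u) y * l (s, u) y.
  by rewrite [RHS]pair_big; apply: eq_big => // -[s u].
rewrite /pT12Y /=.
under eq_bigr do under eq_bigr do under eq_bigr do rewrite mulr_suml.
under eq_bigr do under eq_bigr do rewrite exchange_big.
under eq_bigr do rewrite exchange_big.
rewrite exchange_big; apply: eq_bigr => x _; apply: eq_bigr => s _.
rewrite mulr_sumr; apply: eq_bigr => u _.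
rewrite mulr_sumr; apply: eq_bigr => y _; ring.
Qed.
End Rearr.

Section Spec.
Variables (R : realType) (X T1 : finType) (x0 : X) (t t' : T1).
Definition vd (x : X) (s : T1) : R := (x == x0)%:R * ((s == t)%:R - (s == t')%:R).

Lemma sum_ind (g : T1 -> R) (a : T1) : \sum_s (s == a)%:R * g s = g a.
Proof.
rewrite (bigD1 a) //= eqxx mul1r big1 ?addr0 // => s sn; by rewrite (negbTE sn) mul0r.
Qed.

Lemma spec (g : X -> T1 -> R) : \sum_x \sum_s vd x s * g x s = g x0 t - g x0 t'.
Proof.
rewrite (bigD1 x0) //= [X in _ + X]big1 ?addr0; last first.
  move=> x xn; apply: big1 => s _; rewrite /vd (negbTE xn); by rewrite !mul0r.
rewrite /vd eqxx.
under eq_bigr do rewrite mul1r.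
under eq_bigr do rewrite mulrBl.
by rewrite sumrB !sum_ind.
Qed.


End Spec.


Lemma lnD (R : realType) (a b : R) : 0 < a -> 0 < b -> ln (a / b) = ln a - ln b.
Proof. by move=> ha hb; rewrite ln_div. Qed.
Lemma lnMM (R : realType) (a b : R) : 0 < a -> 0 < b -> ln (a * b) = ln a + ln b.
Proof. by move=> ha hb; rewrite lnM. Qed.

Section Alg.
Variables (R : realType) (X Y T1 T2 : finType) (pXY : X -> Y -> R).
Variables (q1 : X -> T1 -> R) (q2 : X -> T2 -> R) (beta gamma : R) (x1 : X).
Hypothesis pXY_ge0 : forall x y, 0 <= pXY x y.
Hypothesis pX_gt0 : forall x, 0 < pX pXY x.
Hypothesis q1_gt0 : forall x s, 0 < q1 x s.
Hypothesis q2_gt0 : forall x u, 0 < q2 x u.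
Hypothesis beta_gt0 : 0 < beta.

Lemma pT1p s : 0 < pT1 pXY q1 s.
Proof. apply: (@sum_gt0 _ _ _ x1) => [x|]; [exact/mulr_ge0/ltW/q1_gt0/ltW|exact: mulr_gt0]. Qed.
Lemma pT2p u : 0 < pT2 pXY q2 u.
Proof. apply: (@sum_gt0 _ _ _ x1) => [x|]; [exact/mulr_ge0/ltW/q2_gt0/ltW|exact: mulr_gt0]. Qed.
Lemma pT1T2p s u : 0 < pT1T2 pXY q1 q2 s u.
Proof.
apply: (@sum_gt0 _ _ _ x1) => [x|]; last by rewrite !mulr_gt0.
by rewrite !mulr_ge0 // ltW.
Qed.
Lemma pT12Yp x y w : 0 < pXY x y -> 0 < pT12Y pXY q1 q2 w y.
Proof.
move=> h; apply: (@sum_gt0 _ _ _ x) => [x'|]; last by rewrite !mulr_gt0.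
by rewrite !mulr_ge0 // ltW.
Qed.
Lemma pYp x y : 0 < pXY x y -> 0 < pY pXY y.
Proof. by move=> h; apply: (@sum_gt0 _ _ _ x). Qed.

Definition g1 x s := pX pXY x * ln (pXT1 pXY q1 x s / (pX pXY x * pT1 pXY q1 s)).
Definition g2 x s := pX pXY x * \sum_u q2 x u *
  ln (pT1T2 pXY q1 q2 s u / (pT1 pXY q1 s * pT2 pXY q2 u)).
Definition g3 x s := \sum_u \sum_y pXY x y * q2 x u *
  ln (pT12Y pXY q1 q2 (s, u) y / (pT12 pXY q1 q2 (s, u) * pY pXY y)).
Definition Lq x s := ln (q1 x s) - ln (pT1 pXY q1 s) - expo1 pXY beta gamma q1 q2 x s.
Definition cc x := gamma * (pX pXY x * \sum_u q2 x u * (ln (q2 x u) - ln (pT2 pXY q2 u)))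
  - \sum_u \sum_y pXY x y * q2 x u * (ln (pXY x y / pX pXY x) - ln (pY pXY y)).

Lemma g1E x s : g1 x s = pX pXY x * (ln (q1 x s) - ln (pT1 pXY q1 s)).
Proof.
rewrite /g1 /pXT1; congr (_ * _).
rewrite -lnD //; last exact: pT1p.
congr ln; field; rewrite !gt_eqF //; exact: pT1p.
Qed.

Lemma g2E x s : g2 x s = - pX pXY x * KL (q2 x) (pT2gT1 pXY q1 q2 s)
  + pX pXY x * \sum_u q2 x u * (ln (q2 x u) - ln (pT2 pXY q2 u)).
Proof.
rewrite /g2 /KL mulNr -mulrN -mulrDr -sumrN -big_split /=; congr (_ * _).
apply: eq_bigr => u _; rewrite plogqE /pT2gT1.
have h1 := pT1T2p s u; have h2 := pT1p s; have h3 := pT2p u; have h4 := q2_gt0 x u.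
rewrite lnD ?mulr_gt0 // lnMM // lnD ?divr_gt0 // lnD //; ring.
Qed.

Lemma g3E x s : g3 x s = - pX pXY x * \sum_u q2 x u * KL (pYgX pXY x) (pYgT12 pXY q1 q2 s u)
  + \sum_u \sum_y pXY x y * q2 x u * (ln (pXY x y / pX pXY x) - ln (pY pXY y)).
Proof.
rewrite /g3 mulNr mulr_sumr -sumrN -big_split /=; apply: eq_bigr => u _.
rewrite /KL !mulr_sumr -sumrN -big_split /=; apply: eq_bigr => y _.
rewrite plogqE /pYgX /pYgT12 /pT12 /=.
have [z|p] := eqVneq (pXY x y) 0.
  by rewrite z !mul0r mulr0 mulr0 oppr0 addr0.
have hp : 0 < pXY x y by rewrite lt_def p pXY_ge0.
have h1 := pT1T2p s u; have h2 := pT12Yp (s, u) hp; have h3 := pYp hp.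
have h4 := q2_gt0 x u; have h5 := pX_gt0 x.
rewrite lnD ?mulr_gt0 // lnMM // lnD ?divr_gt0 // lnD // lnD //.
field; rewrite gt_eqF //.
Qed.

Lemma Gcomb x s : - g3 x s + beta * g1 x s + gamma * g2 x s =
  beta * pX pXY x * Lq x s + cc x.
Proof.
rewrite g1E g2E g3E /Lq /cc /expo1.
set K2 := KL _ _; set S := \sum_u _.
field; rewrite gt_eqF //.
Qed.
End Alg.


Section Stat.
Variables (R : realType) (X Y T1 T2 : finType) (pXY : X -> Y -> R).
Variables (q1 : X -> T1 -> R) (q2 : X -> T2 -> R) (beta lambda gamma : R).
Hypothesis pXY_ge0 : forall x y, 0 <= pXY x y.
Hypothesis pX_gt0 : forall x, 0 < pX pXY x.
Hypothesis q1_gt0 : forall x s, 0 < q1 x s.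
Hypothesis q2_gt0 : forall x u, 0 < q2 x u.
Hypothesis q1sum : forall x, \sum_s q1 x s = 1.
Hypothesis q2sum : forall x, \sum_u q2 x u = 1.
Hypothesis beta_gt0 : 0 < beta.
Hypothesis opt : forall (r1 : X -> T1 -> R) (r2 : X -> T2 -> R),
     cond_dist r1 -> cond_dist r2 ->
     IB_functional pXY beta lambda gamma q1 q2 <=
     IB_functional pXY beta lambda gamma r1 r2.
Variables (x0 : X) (t t' : T1).

Let v := vd R x0 t t'.

Lemma q1e0 : q1e q1 v 0 = q1.
Proof. by apply/funext => x; apply/funext => s; rewrite /q1e mul0r addr0. Qed.

Lemma S1 : \sum_x \sum_s dpl (pXT1 pXY q1 x s) (pXT1 pXY v x s) (pX pXY x * pT1 pXY q1 s)
     (pX pXY x * pT1 pXY v s + pT1 pXY q1 s * 0) = \sum_x \sum_s v x s * g1 pXY q1 x s.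
Proof.
rewrite dpl_split C1 ?addr0 //; last by move=> s; apply: pT1p.
exact: R1.
Qed.

Lemma S2 : \sum_s \sum_u dpl (pT1T2 pXY q1 q2 s u) (pT1T2 pXY v q2 s u)
    (pT1 pXY q1 s * pT2 pXY q2 u) (pT1 pXY q1 s * 0 + pT2 pXY q2 u * pT1 pXY v s)
  = \sum_x \sum_s v x s * g2 pXY q1 q2 x s.
Proof.
rewrite dpl_split C2 ?addr0 //; [|by move=> s; apply: pT1p|by move=> u; apply: pT2p].
exact: R2.
Qed.

Lemma S3 : \sum_w \sum_y dpl (pT12Y pXY q1 q2 w y) (pT12Y pXY v q2 w y)
        (pT12 pXY q1 q2 w * pY pXY y)
        (pT12 pXY q1 q2 w * 0 + pY pXY y * pT12 pXY v q2 w)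
  = \sum_x \sum_s v x s * g3 pXY q1 q2 x s.
Proof.
rewrite dpl_split C3 ?addr0 //; last by move=> s u; apply: pT1T2p.
exact: R3.
Qed.

Lemma vd_sum x : \sum_s vd R x0 t t' x s = 0.
Proof.
rewrite /vd -mulr_sumr sumrB.
have h (a : T1) : \sum_(s : T1) (s == a)%:R = 1 :> R.
  by rewrite (bigD1 a) //= eqxx big1 ?addr0 // => s sn; rewrite (negbTE sn).
by rewrite !h subrr mulr0.
Qed.

Lemma stat (x1 : X) : Lq pXY q1 q2 beta gamma x0 t = Lq pXY q1 q2 beta gamma x0 t'.
Proof.
set m := Num.min (q1 x0 t) (q1 x0 t').
have m0 : 0 < m by rewrite lt_min !q1_gt0.
have mt : m <= q1 x0 t by rewrite /m ge_min lexx.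
have mt' : m <= q1 x0 t' by rewrite /m ge_min lexx orbT.
have pos z : z \in `]-m, m[ -> forall x s, 0 < q1e q1 v z x s.
  rewrite in_itv /= => /andP[zl zr] x s; rewrite /q1e /v /vd.
  have [->|xn] := eqVneq x x0; last by rewrite mul0r mulr0 addr0.
  rewrite ?eqxx ?mul1r.
  have h1 := q1_gt0 x0 s.
  have [st|st] := eqVneq s t; have [st'|st'] := eqVneq s t'.
  - by rewrite subrr mulr0 addr0.
  - rewrite subr0 mulr1 st; lra.
  - by rewrite st' sub0r mulrN1; lra.
  - by rewrite subrr mulr0 addr0.
have cd z : z \in `]-m, m[ -> cond_dist (q1e q1 v z).
  move=> hz; split; first by move=> x s; apply: ltW; apply: pos.
  move=> x; rewrite /q1e big_split /= q1sum -mulr_sumr.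
  by rewrite /v vd_sum mulr0 addr0.
set f := fun z => IB_functional pXY beta lambda gamma (q1e q1 v z) q2.
have hd z : z \in `]-m, m[ -> is_derive z 1 f (Dval pXY q1 v q2 beta gamma z).
  move=> hz; exact: (d_F pXY_ge0 pX_gt0 q2_gt0 beta lambda gamma x1 (pos z hz)).
have i0 : (0:R) \in `]-m, m[ by rewrite in_itv /= oppr_lt0 m0.
have H0 : is_derive (0:R) 1 f 0.
  apply: (@derive1_at_min _ f (-m) m 0).
  - by rewrite -subr_ge0 opprK; apply: ltW; rewrite addr_gt0.
  - by move=> z hz; exact: (@ex_derive _ _ _ _ _ _ _ (hd z hz)).
  - exact: i0.
  - move=> z hz; rewrite /f q1e0; apply: opt; first exact: cd.
    by split => [x u|x]; [apply: ltW|].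
have D0 : Dval pXY q1 v q2 beta gamma 0 = 0.
  by rewrite -(@derive_val _ _ _ _ _ _ _ (hd 0 i0)) (@derive_val _ _ _ _ _ _ _ H0).
move: D0; rewrite /Dval q1e0 S1 S2 S3 !spec.
have G1 := @Gcomb _ _ _ _ _ pXY q1 q2 beta gamma x1 pXY_ge0 pX_gt0 q1_gt0 q2_gt0 beta_gt0 x0 t.
have G2 := @Gcomb _ _ _ _ _ pXY q1 q2 beta gamma x1 pXY_ge0 pX_gt0 q1_gt0 q2_gt0 beta_gt0 x0 t'.
move=> D0.
have : beta * pX pXY x0 * (Lq pXY q1 q2 beta gamma x0 t - Lq pXY q1 q2 beta gamma x0 t') = 0.
  rewrite mulrBr; apply/eqP; rewrite subr_eq0; apply/eqP.
  apply: (addIr (cc pXY q2 gamma x0)); rewrite -G1 -G2.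
  by apply/eqP; rewrite -subr_eq0; apply/eqP; rewrite -D0; ring.
move=> H; apply/eqP; rewrite -subr_eq0; apply/eqP.
apply: (@mulfI _ (beta * pX pXY x0)); first by rewrite mulf_neq0 ?gt_eqF.
by rewrite H mulr0.
Qed.
End Stat.


Lemma expRln (R : realType) (a : R) : 0 < a -> expR (ln a) = a.
Proof. by move=> h; rewrite lnK // posrE. Qed.

Section Fin.
Variables (R : realType) (X Y T1 T2 : finType) (pXY : X -> Y -> R).
Variables (q1 : X -> T1 -> R) (q2 : X -> T2 -> R) (beta lambda gamma : R).
Hypothesis pXY_ge0 : forall x y, 0 <= pXY x y.
Hypothesis pX_gt0 : forall x, 0 < pX pXY x.
Hypothesis q1_gt0 : forall x s, 0 < q1 x s.
Hypothesis q2_gt0 : forall x u, 0 < q2 x u.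
Hypothesis q1sum : forall x, \sum_s q1 x s = 1.
Hypothesis q2sum : forall x, \sum_u q2 x u = 1.
Hypothesis beta_gt0 : 0 < beta.
Hypothesis opt : forall (r1 : X -> T1 -> R) (r2 : X -> T2 -> R),
     cond_dist r1 -> cond_dist r2 ->
     IB_functional pXY beta lambda gamma q1 q2 <=
     IB_functional pXY beta lambda gamma r1 r2.

Lemma part1 x s : q1 x s =
  pT1 pXY q1 s / Z1 pXY beta gamma q1 q2 x * expR (expo1 pXY beta gamma q1 q2 x s).
Proof.
have L s' : Lq pXY q1 q2 beta gamma x s' = Lq pXY q1 q2 beta gamma x s.
  exact: (stat pXY_ge0 pX_gt0 q1_gt0 q2_gt0 q1sum q2sum beta_gt0 opt x s' s x).
have E s' : q1 x s' = expR (Lq pXY q1 q2 beta gamma x s) *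
    (pT1 pXY q1 s' * expR (expo1 pXY beta gamma q1 q2 x s')).
  rewrite -(L s') /Lq -(expRln (pT1p x pX_gt0 q1_gt0 s')) -!expRD.
  rewrite -{1}(expRln (q1_gt0 x s')); congr expR; rewrite expRK; ring.
have Z : expR (Lq pXY q1 q2 beta gamma x s) * Z1 pXY beta gamma q1 q2 x = 1.
  by rewrite -(q1sum x) /Z1 mulr_sumr; apply: eq_bigr => s' _; rewrite E.
have Zn0 : Z1 pXY beta gamma q1 q2 x != 0.
  by apply/eqP => Z0; move: Z; rewrite Z0 mulr0 => /eqP; rewrite eq_sym oner_eq0.
rewrite E; have -> : expR (Lq pXY q1 q2 beta gamma x s) = (Z1 pXY beta gamma q1 q2 x)^-1.
  by apply: (mulIf Zn0); rewrite Z mulVf.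
by rewrite mulrA [_^-1 * _]mulrC.
Qed.
End Fin.


Section Swap.
Variables (R : realType) (X Y T1 T2 : finType) (pXY : X -> Y -> R).

Lemma sw12 (a : X -> T2 -> R) (b : X -> T1 -> R) u s :
  pT1T2 pXY a b u s = pT1T2 pXY b a s u.
Proof. by apply: eq_bigr => x _; rewrite mulrAC. Qed.

Lemma sw12Y (a : X -> T2 -> R) (b : X -> T1 -> R) u s y :
  pT12Y pXY a b (u, s) y = pT12Y pXY b a (s, u) y.
Proof. by apply: eq_bigr => x _; rewrite /= mulrAC. Qed.

Lemma bigpair (A B : finType) (F : A * B -> R) :
  \sum_w F w = \sum_a \sum_b F (a, b).
Proof. by rewrite [RHS]pair_big; apply: eq_big => // -[a b]. Qed.

Lemma IBsym (beta lambda gamma : R) (a : X -> T2 -> R) (b : X -> T1 -> R) :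
  IB_functional pXY lambda beta gamma a b = IB_functional pXY beta lambda gamma b a.
Proof.
rewrite /IB_functional.
have h1 : I_T1_T2 pXY a b = I_T1_T2 pXY b a.
  rewrite /I_T1_T2 /MI exchange_big; apply: eq_bigr => s _; apply: eq_bigr => u _.
  by rewrite sw12 mulrC.
have h2 : I_Y_T12 pXY a b = I_Y_T12 pXY b a.
  rewrite /I_Y_T12 /MI bigpair [RHS]bigpair exchange_big.
  apply: eq_bigr => s _; apply: eq_bigr => u _; apply: eq_bigr => y _.
  by rewrite sw12Y /pT12 /= sw12.
rewrite h1 h2 /I_T1_X /I_T2_X; ring.
Qed.

Lemma expo_sw (lambda gamma : R) (a : X -> T2 -> R) (b : X -> T1 -> R) x u :
  expo1 pXY lambda gamma a b x u = expo2 pXY lambda gamma b a x u.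
Proof.
rewrite /expo1 /expo2; congr (_ * KL _ _ - _ * _).
  by apply/funext => s; rewrite /pT2gT1 /pT1gT2 sw12.
apply: eq_bigr => s _; congr (_ * KL _ _).
by apply/funext => y; rewrite /pYgT12 sw12Y sw12.
Qed.
End Swap.


Theorem theorem1 (R : realType) (X Y T1 T2 : finType) (pXY : X -> Y -> R)
  (beta lambda gamma : R)
  (q1 : X -> T1 -> R) (q2 : X -> T2 -> R) :
  joint_dist pXY ->
  (forall x, 0 < pX pXY x) ->
  0 < beta -> 0 < lambda -> 0 <= gamma ->
  cond_dist q1 -> cond_dist q2 ->
  (forall x t1, 0 < q1 x t1) -> (forall x t2, 0 < q2 x t2) ->
  (forall (r1 : X -> T1 -> R) (r2 : X -> T2 -> R),
     cond_dist r1 -> cond_dist r2 ->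
     IB_functional pXY beta lambda gamma q1 q2 <=
     IB_functional pXY beta lambda gamma r1 r2) ->
  (forall x t1, q1 x t1 =
     pT1 pXY q1 t1 / Z1 pXY beta gamma q1 q2 x * expR (expo1 pXY beta gamma q1 q2 x t1)) /\
  (forall x t2, q2 x t2 =
     pT2 pXY q2 t2 / Z2 pXY lambda gamma q1 q2 x * expR (expo2 pXY lambda gamma q1 q2 x t2)).
Proof.
move=> [pXY_ge0 _] pX_gt0 beta_gt0 lambda_gt0 _ [_ q1sum] [_ q2sum] q1_gt0 q2_gt0 opt.
split.
  exact: (part1 pXY_ge0 pX_gt0 q1_gt0 q2_gt0 q1sum q2sum beta_gt0 opt).
move=> x u.
have opt' : forall (r2 : X -> T2 -> R) (r1 : X -> T1 -> R), cond_dist r2 -> cond_dist r1 ->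
    IB_functional pXY lambda beta gamma q2 q1 <= IB_functional pXY lambda beta gamma r2 r1.
  by move=> r2 r1 h2 h1; rewrite (IBsym pXY beta lambda gamma q2 q1) (IBsym pXY beta lambda gamma r2 r1); apply: opt.
have := part1 pXY_ge0 pX_gt0 q2_gt0 q1_gt0 q2sum q1sum lambda_gt0 opt' x u.
move=> ->; rewrite expo_sw /Z1 /Z2; congr (_ / _ * _).
by apply: eq_bigr => s _; rewrite expo_sw.
Qed.
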